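(* Let $X$ be a Banach space and $k\in\mathbb{N}$. Every bounded $k$-sequence $(x_s)_{s\in[\mathbb{N}]^k}$ in $X$ (i.e. $\sup_s\|x_s\|<\infty$) admits a $k$-spreading model: there exist an infinite $M\subseteq\mathbb{N}$ and a seminorm $\|\cdot\|_*$ on $c_{00}(\mathbb{N})$ such that $(x_s)_{s\in[M]^k}$ generates the natural Hamel basis $(e_n)_n$ of $(c_{00}(\mathbb{N}),\|\cdot\|_* )$ as a $k$-spreading model.
   Context: $[M]^k$ denotes the $k$-element subsets of $M\subseteq\mathbb{N}$, each $s$ identified with its increasing enumeration $s(1)<\dots<s(k)$; $M(n)$ denotes the $n$-th element of $M$. A $k$-sequence in $X$ is a map $[\mathbb{N}]^k\to X$, written $(x_s)_{s\in[\mathbb{N}]^k}$; its restriction to $[M]^k$ is written $(x_s)_{s\in[M]^k}$. A finite sequence $(s_j)_{j=1}^l$ in $[M]^k$ is a plegma family if $s_1(i)<\dots<s_l(i)$ for every $1\le i\le k$ and $s_l(i)<s_1(i+1)$ for every $1\le i<k$; $\mathrm{Plm}_l([M]^k)$ is the set of such families of length $l$. Given an infinite-dimensional seminormed space $(E,\|\cdot\|_* )$ with Hamel basis $(e_n)_n$, we say $(x_s)_{s\in[M]^k}$ generates $(e_n)_n$ as a $k$-spreading model if there is a null sequence $(\delta_n)$ of positive reals such that for all $m\le l$, all $(s_j)_{j=1}^m\in\mathrm{Plm}_m([M]^k)$ with $s_1(1)\ge M(l)$ and all $a_1,\dots,a_m\in[-1,1]$: $\big|\|\sum_{j=1}^m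 a_jx_{s_j}\|-\|\sum_{j=1}^m a_je_j\|_*\big|\le\delta_l$. A $k$-sequence admits $(e_n)$ as a $k$-spreading model if some $(x_s)_{s\in[M]^k}$ generates it. *)

(* Defs.v *)
From Stdlib Require Import Reals Lra List.
Import ListNotations.
Open Scope R_scope.

Record Banach := {
  carrier :> Type;
  vzero : carrier;
  vadd : carrier -> carrier -> carrier;
  vopp : carrier -> carrier;
  vscal : R -> carrier -> carrier;
  vnorm : carrier -> R;
  vadd_assoc : forall x y z, vadd x (vadd y z) = vadd (vadd x y) z;
  vadd_comm : forall x y, vadd x y = vadd y x;
  vadd_0 : forall x, vadd x vzero = x;
  vadd_opp : forall x, vadd x (vopp x) = vzero;
  vscal_1 : forall x, vscal 1 x = x;
  vscal_assoc : forall a b x, vscal a (vscal b x) = vscal (a * b) x;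
  vscal_distr_l : forall a x y, vscal a (vadd x y) = vadd (vscal a x) (vscal a y);
  vscal_distr_r : forall a b x, vscal (a + b) x = vadd (vscal a x) (vscal b x);
  vnorm_eq0 : forall x, vnorm x = 0 -> x = vzero;
  vnorm_scal : forall a x, vnorm (vscal a x) = Rabs a * vnorm x;
  vnorm_triangle : forall x y, vnorm (vadd x y) <= vnorm x + vnorm y;
  vcomplete : forall u : nat -> carrier,
    (forall eps, 0 < eps -> exists N, forall n m, (N <= n)%nat -> (N <= m)%nat ->
        vnorm (vadd (u n) (vopp (u m))) < eps) ->
    exists l, forall eps, 0 < eps -> exists N, forall n, (N <= n)%nat ->
        vnorm (vadd (u n) (vopp l)) < eps
}.

Fixpoint vsum (X : Banach) (n : nat) (f : nat -> X) : X :=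
  match n with
  | O => vzero X
  | S n' => vadd X (vsum X n' f) (f n')
  end.

(** Infinite subsets of N are represented by their strictly increasing
    enumeration M : nat -> nat; the paper's M(n) (n >= 1) is [M (n-1)]. *)
Definition strict_incr (M : nat -> nat) : Prop := forall n, (M n < M (S n))%nat.

(** An element s of [M]^k: a list of length k, strictly increasing
    (s(i+1) in the paper is [nth i s 0]), with all entries in M. *)
Definition in_subsets (M : nat -> nat) (k : nat) (s : list nat) : Prop :=
  length s = k /\
  (forall i, (S i < k)%nat -> (nth i  s 0%nat < nth (S i) s 0%nat)%nat) /\
  (forall i, (i < k)%nat -> exists n, nth i  s 0%nat = M n).

Definition in_Nk (k : nat) (s : list nat) : Prop := in_subsets (fun n => n) k s.

(** (s_j)_{j=1}^l (here s 0, ..., s (l-1)) is a plegma family in [M]^k. *)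
Definition plegma (M : nat -> nat) (k l : nat) (s : nat -> list nat) : Prop :=
  (forall j, (j < l)%nat -> in_subsets M k (s j)) /\
  (forall i j, (i < k)%nat -> (S j < l)%nat ->
     (nth i (s j) 0%nat < nth i (s (S j)) 0%nat)%nat) /\
  (forall i, (S i < k)%nat -> (0 < l)%nat ->
     (nth i (s (l - 1)%nat) 0%nat < nth (S i) (s 0%nat) 0%nat)%nat).

(** c00(N) = finitely supported real sequences; e_n is the n-th unit vector
    (0-indexed: paper's e_j is our index j-1). *)
Definition c00 (f : nat -> R) : Prop :=
  exists N, forall n, (N <= n)%nat -> f n = 0.

Definition seminorm_c00 (N : (nat -> R) -> R) : Prop :=
  (forall f, c00 f -> 0 <= N f) /\
  (forall a f, c00 f -> N (fun n => a * f n) = Rabs a * N f) /\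
  (forall f g, c00 f -> c00 g -> N (fun n => f n + g n) <= N f + N g).

(** sum_{j=1}^m a_j e_j in c00, with a_j = a (j-1). *)
Definition c00_comb (m : nat) (a : nat -> R) : nat -> R :=
  fun n => if Nat.ltb n m then a n else 0.

Definition generates_spreading_model (X : Banach) (k : nat)
    (x : list nat -> X) (M : nat -> nat) (N : (nat -> R) -> R) : Prop :=
  exists delta : nat -> R,
    (forall n, 0 < delta n) /\ Un_cv delta 0 /\
    forall (l m : nat) (s : nat -> list nat) (a : nat -> R),
      (1 <= l)%nat -> (m <= l)%nat ->
      plegma M k m s ->
      (0 < m -> M (l - 1)%nat <= nth 0 (s 0%nat) 0%nat)%nat ->
      (forall j, (j < m)%nat -> -1 <= a j <= 1) ->
      Rabs (vnorm X (vsum X m (fun j => vscal X (a j) (x (s j))))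
            - N (c00_comb m a)) <= delta l.

(* Main.v *)
Require Import Defs.
From Stdlib Require Import Reals List.
From Stdlib Require Import Lra Lia ZArith Sorted ClassicalEpsilon Classical FunctionalExtensionality.
Import ListNotations.
Open Scope R_scope.

Lemma v_cancel (X : Banach) (y : X) : vadd X y y = y -> y = vzero X.
Proof.
  intro H. transitivity (vadd X (vadd X y y) (vopp X y)).
  - rewrite <- vadd_assoc, vadd_opp, vadd_0. reflexivity.
  - rewrite H. apply vadd_opp.
Qed.

Lemma vscal_0 (X : Banach) (x : X) : vscal X 0 x = vzero X.
Proof.
  apply v_cancel. rewrite <- vscal_distr_r. f_equal. ring.
Qed.

Lemma vscal_zero (X : Banach) (a : R) : vscal X a (vzero X) = vzero X.
Proof.
  rewrite <- (vscal_0 X (vzero X)), vscal_assoc. f_equal. ring.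
Qed.

Lemma vadd_0l (X : Banach) (x : X) : vadd X (vzero X) x = x.
Proof. rewrite vadd_comm; apply vadd_0. Qed.

Lemma vnorm_zero (X : Banach) : vnorm X (vzero X) = 0.
Proof.
  rewrite <- (vscal_0 X (vzero X)), vnorm_scal, Rabs_R0. ring.
Qed.

Lemma vnorm_nonneg (X : Banach) (x : X) : 0 <= vnorm X x.
Proof.
  assert (H := vnorm_triangle X x (vscal X (-1) x)).
  rewrite <- (vscal_1 X x) in H at 1.
  rewrite <- vscal_distr_r in H.
  replace (1 + -1) with 0 in H by ring.
  rewrite vscal_0, vnorm_zero, vnorm_scal in H.
  replace (Rabs (-1)) with 1 in H by (rewrite Rabs_left; lra). lra.
Qed.

Lemma vsum_ext (X : Banach) n (f g : nat -> X) :
  (forall j, (j < n)%nat -> f j = g j) -> vsum X n f = vsum X n g.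
Proof.
  induction n; simpl; intros H; auto.
  rewrite IHn by (intros; apply H; lia). rewrite H by lia. reflexivity.
Qed.

Lemma vsum_scal (X : Banach) n a (f : nat -> X) :
  vscal X a (vsum X n f) = vsum X n (fun j => vscal X a (f j)).
Proof.
  induction n; simpl. apply vscal_zero.
  rewrite vscal_distr_l, IHn. reflexivity.
Qed.

Lemma vadd_swap (X : Banach) (a b c d : X) :
  vadd X (vadd X a b) (vadd X c d) = vadd X (vadd X a c) (vadd X b d).
Proof.
  rewrite !vadd_assoc. f_equal. rewrite <- !vadd_assoc. f_equal. apply vadd_comm.
Qed.

Lemma vsum_add (X : Banach) n (f g : nat -> X) :
  vsum X n (fun j => vadd X (f j) (g j)) = vadd X (vsum X n f) (vsum X n g).
Proof.
  induction n; simpl. rewrite vadd_0. reflexivity.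
  rewrite IHn. apply vadd_swap.
Qed.

Lemma vsum_tail (X : Banach) m p (f : nat -> X) :
  (forall j, (m <= j)%nat -> f j = vzero X) -> (m <= p)%nat -> vsum X p f = vsum X m f.
Proof.
  intros H Hmp. induction Hmp; auto. simpl. rewrite H by lia. rewrite vadd_0. auto.
Qed.

Lemma vsum_bound (X : Banach) n (f : nat -> X) e :
  (forall j, (j < n)%nat -> vnorm X (f j) <= e) -> vnorm X (vsum X n f) <= INR n * e.
Proof.
  induction n; intros H. simpl. rewrite vnorm_zero. lra.
  change (vsum X (S n) f) with (vadd X (vsum X n f) (f n)).
  eapply Rle_trans. apply vnorm_triangle.
  rewrite S_INR. assert (H1 := H n (Nat.lt_succ_diag_r n)).
  assert (IHn' : vnorm X (vsum X n f) <= INR n * e) by (apply IHn; intros; apply H; lia).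
  lra.
Qed.

Definition Fa (X : Banach) (x : list nat -> X) (m : nat) (a : nat -> R) (s : nat -> list nat) : R :=
  vnorm X (vsum X m (fun j => vscal X (a j) (x (s j)))).

Lemma Fa_ext (X : Banach) x m a b s s' :
  (forall j, (j < m)%nat -> a j = b j /\ s j = s' j) -> Fa X x m a s = Fa X x m b s'.
Proof.
  intros H. unfold Fa. f_equal. apply vsum_ext. intros j Hj. destruct (H j Hj) as [-> ->]. auto.
Qed.

Lemma Fa_tail (X : Banach) x m p a s :
  (forall j, (m <= j)%nat -> a j = 0) -> (m <= p)%nat -> Fa X x p a s = Fa X x m a s.
Proof.
  intros H Hmp. unfold Fa. f_equal. apply vsum_tail; auto.
  intros j Hj. rewrite H by auto. apply vscal_0.
Qed.

Lemma Fa_lip (X : Banach) x m a b s e C :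
  (forall j, (j < m)%nat -> Rabs (a j - b j) <= e) ->
  (forall j, (j < m)%nat -> vnorm X (x (s j)) <= C) -> 0 <= C ->
  Rabs (Fa X x m a s - Fa X x m b s) <= INR m * (e * C).
Proof.
  intros Hab Hx HC.
  assert (Gen : forall a b, (forall j, (j < m)%nat -> Rabs (a j - b j) <= e) ->
     Fa X x m a s <= Fa X x m b s + INR m * (e * C)).
  { clear Hab. intros a0 b0 Hab. unfold Fa.
    replace (vsum X m (fun j => vscal X (a0 j) (x (s j)))) with
      (vadd X (vsum X m (fun j => vscal X (b0 j) (x (s j))))
              (vsum X m (fun j => vscal X (a0 j - b0 j) (x (s j))))).
    2:{ rewrite <- vsum_add. apply vsum_ext. intros. rewrite <- vscal_distr_r. f_equal. ring. }
    eapply Rle_trans. apply vnorm_triangle. apply Rplus_le_compat_l.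
    apply vsum_bound. intros j Hj. rewrite vnorm_scal. apply Rmult_le_compat; auto.
    apply Rabs_pos. apply vnorm_nonneg. }
  assert (H1 := Gen a b Hab).
  assert (H2 := Gen b a ltac:(intros j Hj; rewrite Rabs_minus_sym; auto)).
  apply Rabs_le. lra.
Qed.

Lemma Fa_scal (X : Banach) x m a f s :
  Fa X x m (fun n => a * f n) s = Rabs a * Fa X x m f s.
Proof.
  unfold Fa. rewrite <- vnorm_scal, vsum_scal. f_equal. apply vsum_ext.
  intros. rewrite vscal_assoc. auto.
Qed.

Lemma Fa_add (X : Banach) x m f g s :
  Fa X x m (fun n => f n + g n) s <= Fa X x m f s + Fa X x m g s.
Proof.
  unfold Fa.
  eapply Rle_trans. 2: apply vnorm_triangle. right. f_equal.
  rewrite <- vsum_add. apply vsum_ext. intros. apply vscal_distr_r.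
Qed.

Definition rel (M : nat -> nat) (n : nat) (t : list nat) : Prop :=
  length t = n /\ StronglySorted lt t /\ forall y, In y t -> exists i, y = M i.

Definition subseq (M' M : nat -> nat) : Prop :=
  strict_incr M' /\ forall n, exists i, M' n = M i.

Lemma si_mono M i j : strict_incr M -> (i < j)%nat -> (M i < M j)%nat.
Proof.
  intros H Hij. induction Hij. apply H. specialize (H m). lia.
Qed.

Lemma si_le M i j : strict_incr M -> (i <= j)%nat -> (M i <= M j)%nat.
Proof.
  intros H Hij. destruct (Nat.eq_dec i j). subst; lia.
  assert (M i < M j)%nat by (apply si_mono; auto; lia). lia.
Qed.

Lemma si_refl M i j : strict_incr M -> (M i < M j)%nat -> (i < j)%nat.
Proof.
  intros H Hij. destruct (Nat.lt_ge_cases i j); auto.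
  assert (M j <= M i)%nat by (apply si_le; auto). lia.
Qed.

Lemma si_refl_le M i j : strict_incr M -> (M i <= M j)%nat -> (i <= j)%nat.
Proof.
  intros H Hij. destruct (Nat.le_gt_cases i j); auto.
  assert (M j < M i)%nat by (apply si_mono; auto). lia.
Qed.

Lemma subseq_ge M' M n : strict_incr M -> subseq M' M -> (M n <= M' n)%nat.
Proof.
  intros HM [HM' Hr]. induction n.
  - destruct (Hr 0%nat) as [i Hi]. rewrite Hi. apply si_le; auto; lia.
  - destruct (Hr (S n)) as [i Hi]. assert (H1 := HM' n).
    assert (M n < M i)%nat by lia.
    assert (n < i)%nat by (apply (si_refl M); auto).
    rewrite Hi. apply si_le; auto.
Qed.

Lemma rel_sub M' M n t : (forall j, exists i, M' j = M i) -> rel M' n t -> rel M n t.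
Proof.
  intros Hr [H1 [H2 H3]]. repeat split; auto.
  intros y Hy. destruct (H3 y Hy) as [j ->]. apply Hr.
Qed.

Lemma subseq_trans M1 M2 M3 : subseq M1 M2 -> subseq M2 M3 -> subseq M1 M3.
Proof.
  intros [H1 R1] [H2 R2]. split; auto. intros n. destruct (R1 n) as [i Hi].
  destruct (R2 i) as [j Hj]. exists j. congruence.
Qed.

Lemma io_subseq (P : nat -> Prop) :
  (forall N, exists i, (N <= i)%nat /\ P i) ->
  exists psi, strict_incr psi /\ forall j, P (psi j).
Proof.
  intros H.
  assert (G : forall N, {i | (N <= i)%nat /\ P i}).
  { intros N. apply constructive_indefinite_description. apply H. }
  pose (psi := nat_rect (fun _ => nat) (proj1_sig (G 0%nat))
                 (fun _ p => proj1_sig (G (S p)))).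
  exists psi. split.
  - intros n. change (psi (S n)) with (proj1_sig (G (S (psi n)))).
    destruct (proj2_sig (G (S (psi n)))) as [Hi _]. lia.
  - intros j. destruct j.
    + change (psi 0%nat) with (proj1_sig (G 0%nat)). apply (proj2_sig (G 0%nat)).
    + change (psi (S j)) with (proj1_sig (G (S (psi j)))). apply (proj2_sig (G (S (psi j)))).
Qed.

Lemma pigeon_aux K (col : nat -> nat) N :
  (forall i, (N <= i)%nat -> (col i < K)%nat) ->
  exists kap, forall N', exists i, (N' <= i)%nat /\ col i = kap.
Proof.
  revert N. induction K; intros N H.
  - specialize (H N (le_n N)). lia.
  - destruct (classic (forall N', exists i, (N' <= i)%nat /\ col i = K)) as [Hy|Hn].
    + exists K; auto.
    + apply not_all_ex_not in Hn. destruct Hn as [N' HN'].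
      apply (IHK (Nat.max N N')). intros i Hi.
      assert (col i < S K)%nat by (apply H; lia).
      destruct (Nat.eq_dec (col i) K); [|lia].
      exfalso. apply HN'. exists i. split; auto; lia.
Qed.

Lemma pigeon K (col : nat -> nat) :
  (forall i, (col i < K)%nat) ->
  exists kap psi, strict_incr psi /\ forall j, col (psi j) = kap.
Proof.
  intros H. destruct (pigeon_aux K col 0 (fun i _ => H i)) as [kap Hk].
  destruct (io_subseq (fun i => col i = kap) Hk) as [psi [H1 H2]].
  exists kap, psi; auto.
Qed.

Lemma ramsey n : forall K (c : list nat -> nat) M,
  (forall t, (c t < K)%nat) -> strict_incr M ->
  exists M' col, (col < K)%nat /\ subseq M' M /\ forall t, rel M' n t -> c t = col.
Proof.
  induction n; intros K c M HK HM.
  - exists M, (c nil). split; auto. split. split; auto. intros j; exists j; auto.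
    intros t [Ht _]. destruct t; [auto|discriminate].
  - assert (Ex : forall (a : nat) (A : nat -> nat), exists p : (nat -> nat) * nat,
        strict_incr A -> (snd p < K)%nat /\ subseq (fst p) A /\
        forall t, rel (fst p) n t -> c (a :: t) = snd p).
    { intros a A. destruct (classic (strict_incr A)) as [HA|HA].
      - destruct (IHn K (fun t => c (a :: t)) A (fun t => HK _) HA) as [M' [col H]].
        exists (M', col). auto.
      - exists (A, 0%nat). intros; contradiction. }
    pose (G := fun a A => proj1_sig (constructive_indefinite_description _ (Ex a A))).
    assert (GS : forall a A, strict_incr A -> (snd (G a A) < K)%nat /\ subseq (fst (G a A)) A /\
        forall t, rel (fst (G a A)) n t -> c (a :: t) = snd (G a A)).
    { intros a A. unfold G. destruct (constructive_indefinite_description _ (Ex a A)). auto. }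
    pose (A := nat_rect (fun _ => nat -> nat) M
                 (fun _ Ai => fst (G (Ai 0%nat) (fun m => Ai (S m))))).
    assert (AS : forall i, A (S i) = fst (G (A i 0%nat) (fun m => A i (S m)))) by reflexivity.
    assert (A0 : A 0%nat = M) by reflexivity.
    clearbody A.
    assert (Ainc : forall i, strict_incr (A i)).
    { induction i. rewrite A0; auto. rewrite AS.
      apply (GS _ _ (fun m => IHi (S m))). }
    assert (Aspec : forall i, (snd (G (A i 0%nat) (fun m => A i (S m))) < K)%nat /\
        (forall m, exists m', A (S i) m = A i (S m')) /\
        forall t, rel (A (S i)) n t -> c (A i 0%nat :: t) = snd (G (A i 0%nat) (fun m => A i (S m)))).
    { intros i. destruct (GS (A i 0%nat) (fun m => A i (S m)) (fun m => Ainc i (S m))) as [H1 [[_ H2] H3]].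
      rewrite AS. auto. }
    pose (col := fun i => snd (G (A i 0%nat) (fun m => A i (S m)))).
    assert (Arange : forall i j, (i <= j)%nat -> forall m, exists m', A j m = A i m').
    { intros i j Hij. induction Hij as [|j' Hij IH]. intros m; exists m; auto.
      intros m. destruct (proj1 (proj2 (Aspec j')) m) as [m' Hm'].
      destruct (IH (S m')) as [m'' Hm'']. exists m''. congruence. }
    pose (a := fun i => A i 0%nat).
    assert (Aafter : forall i j, (i < j)%nat -> exists m, a j = A (S i) m).
    { intros i j Hij. destruct (Arange (S i) j Hij 0%nat) as [m Hm]. exists m. auto. }
    assert (Ainc2 : strict_incr a).
    { intros i. destruct (Aafter i (S i) (Nat.lt_succ_diag_r i)) as [m Hm].
      destruct (proj1 (proj2 (Aspec i)) m) as [m' Hm'].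
      unfold a in *. rewrite Hm, Hm'. apply si_mono; auto. lia. }
    destruct (pigeon K col (fun i => proj1 (Aspec i))) as [kap [psi [Hpsi Hcol]]].
    exists (fun j => a (psi j)), kap. split.
    { rewrite <- (Hcol 0%nat). apply Aspec. }
    split. split.
    { intros j. apply si_mono; auto. }
    { intros j. destruct (Arange 0%nat (psi j) (Nat.le_0_l _) 0%nat) as [m Hm].
      exists m. unfold a. rewrite Hm, A0. auto. }
    intros t [Hlen [Hss Hin]]. destruct t as [|y t']; [discriminate|].
    simpl in Hlen. injection Hlen as Hlen.
    apply StronglySorted_inv in Hss. destruct Hss as [Hss Hfa].
    destruct (Hin y (or_introl eq_refl)) as [j0 Hy].
    rewrite <- (Hcol j0). unfold col. subst y.
    apply (proj2 (proj2 (Aspec (psi j0)))).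
    split; auto. split; auto.
    intros z Hz. destruct (Hin z (or_intror Hz)) as [j Hj].
    rewrite Forall_forall in Hfa. specialize (Hfa z Hz). rewrite Hj in Hfa.
    assert (psi j0 < psi j)%nat by (apply (si_refl a); auto).

    destruct (Aafter _ _ H) as [m Hm]. exists m. rewrite Hj. exact Hm.
Qed.

Lemma up_pos y : 0 <= y -> (0 <= up y)%Z.
Proof.
  intros H. destruct (archimed y) as [H1 _]. apply le_IZR. lra.
Qed.

Lemma up_le y Y : 0 <= y -> y <= Y -> (Z.to_nat (up y) <= Z.to_nat (up Y))%nat.
Proof.
  intros H0 H. destruct (archimed y) as [H1 H2]. destruct (archimed Y) as [H3 H4].
  apply Z2Nat.inj_le. apply up_pos; lra. apply up_pos; lra.
  assert (up y < up Y + 1)%Z. { apply lt_IZR. rewrite plus_IZR. simpl. lra. }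
  lia.
Qed.

Lemma up_eq y y' : 0 <= y -> 0 <= y' -> Z.to_nat (up y) = Z.to_nat (up y') -> Rabs (y - y') < 1.
Proof.
  intros H H' E. apply Z2Nat.inj in E; try (apply up_pos; auto).
  destruct (archimed y) as [H1 H2]. destruct (archimed y') as [H3 H4].
  rewrite E in *. apply Rabs_def1; lra.
Qed.

Lemma stepA1 n (f : list nat -> R) B eps M :
  0 < eps -> strict_incr M -> (forall t, rel M n t -> Rabs (f t) <= B) ->
  exists M', subseq M' M /\ forall t t', rel M' n t -> rel M' n t' -> Rabs (f t - f t') <= eps.
Proof.
  intros He HM HB.
  pose (K := Z.to_nat (up (2 * B / eps))).
  pose (c := fun t => Nat.min (Z.to_nat (up ((f t + B) / eps))) K).
  destruct (ramsey n (S K) c M) as [M' [col [_ [Hsub Hc]]]]; auto.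
  { intros t. unfold c. lia. }
  exists M'. split; auto. intros t t' Ht Ht'.
  assert (Key : forall t, rel M' n t -> 0 <= (f t + B) / eps /\ c t = Z.to_nat (up ((f t + B) / eps))).
  { intros u Hu. assert (Hb := HB u (rel_sub _ _ _ _ (proj2 Hsub) Hu)).
    pose proof (Rle_abs (f u)) as Ha1. pose proof (Rle_abs (- f u)) as Ha2. rewrite Rabs_Ropp in Ha2.
    assert (0 <= (f u + B) / eps).
    { apply Rmult_le_pos. lra. left; apply Rinv_0_lt_compat; auto. }
    split; auto. unfold c. apply Nat.min_l. unfold K. apply up_le; auto.
    unfold Rdiv. apply Rmult_le_compat_r. left; apply Rinv_0_lt_compat; auto. lra. }
  destruct (Key t Ht) as [Y1 C1]. destruct (Key t' Ht') as [Y2 C2].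
  assert (E : Z.to_nat (up ((f t + B) / eps)) = Z.to_nat (up ((f t' + B) / eps))).
  { rewrite <- C1, <- C2, Hc, Hc; auto. }
  assert (Hl := up_eq _ _ Y1 Y2 E).
  replace ((f t + B) / eps - (f t' + B) / eps) with ((f t - f t') / eps) in Hl by (field; lra).
  unfold Rdiv in Hl. rewrite Rabs_mult, Rabs_inv, (Rabs_right eps) in Hl by lra.
  apply Rmult_lt_compat_r with (r := eps) in Hl; auto.
  rewrite Rmult_assoc, Rinv_l, Rmult_1_r in Hl by lra. lra.
Qed.

Lemma stepA (L : list (nat * (list nat -> R))) B eps : forall M,
  0 < eps -> strict_incr M ->
  (forall n f t, In (n, f) L -> rel M n t -> Rabs (f t) <= B) ->
  exists M', subseq M' M /\ forall n f t t', In (n, f) L -> rel M' n t -> rel M' n t' ->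
     Rabs (f t - f t') <= eps.
Proof.
  induction L as [|[n f] L IH]; intros M He HM HB.
  - exists M. split. split; auto. intros j; exists j; auto. intros n f t t' [].
  - destruct (stepA1 n f B eps M He HM) as [M1 [H1 H1']].
    { intros t Ht. eapply HB; eauto. left; auto. }
    destruct (IH M1 He (proj1 H1)) as [M2 [H2 H2']].
    { intros n' f' t Hin Ht. eapply HB. right; eauto. eapply rel_sub. apply (proj2 H1). auto. }
    exists M2. split. eapply subseq_trans; eauto.
    intros n' f' t t' [Heq|Hin] Ht Ht'.
    + injection Heq as <- <-. apply H1'; apply (rel_sub M2 M1); auto; apply (proj2 H2).
    + eapply H2'; eauto.
Qed.

Definition dec (k m : nat) (t : list nat) (j : nat) : list nat :=
  map (fun i => nth (i * m + j) t 0%nat) (seq 0 k).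

Definition enc (k m : nat) (s : nat -> list nat) : list nat :=
  map (fun r => nth (r / m) (s (r mod m)) 0%nat) (seq 0 (m * k)).

Lemma nth_map_seq (f : nat -> nat) n r d : (r < n)%nat -> nth r (map f (seq 0 n)) d = f r.
Proof.
  intros H. rewrite nth_indep with (d' := f 0%nat) by (rewrite length_map, length_seq; auto).
  rewrite map_nth, seq_nth; auto.
Qed.

Lemma list_as_map (l : list nat) k : length l = k -> map (fun i => nth i l 0%nat) (seq 0 k) = l.
Proof.
  intros H. apply nth_ext with (d := 0%nat) (d' := 0%nat).
  rewrite length_map, length_seq; auto.
  intros n Hn. rewrite length_map, length_seq in Hn. rewrite nth_map_seq; auto.
Qed.

Lemma divmod_eq i j m : (j < m)%nat -> ((i * m + j) / m = i /\ (i * m + j) mod m = j)%nat.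
Proof.
  intros H. split.
  - symmetry. apply Nat.div_unique with (r := j); auto. lia.
  - symmetry. apply Nat.mod_unique with (q := i); auto. lia.
Qed.

Lemma SS_nth t : StronglySorted lt t -> forall r1 r2, (r1 < r2)%nat -> (r2 < length t)%nat ->
  (nth r1 t 0 < nth r2 t 0)%nat.
Proof.
  induction t as [|a t IH]; intros H r1 r2 H12 H2. simpl in H2; lia.
  apply StronglySorted_inv in H. destruct H as [H Hf].
  destruct r2 as [|r2]. lia. simpl in H2.
  destruct r1 as [|r1].
  - simpl. rewrite Forall_forall in Hf. apply Hf. apply nth_In. lia.
  - simpl. apply IH; auto; lia.
Qed.

Lemma nth_SS t : (forall r, (S r < length t)%nat -> (nth r t 0 < nth (S r) t 0)%nat) ->
  StronglySorted lt t.
Proof.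
  intros H. apply Sorted_StronglySorted.
  { intros x y z. apply Nat.lt_trans. }
  induction t as [|a t IH]. constructor.
  constructor.
  - apply IH. intros r Hr. apply (H (S r)). simpl. lia.
  - destruct t as [|b t]. constructor. constructor. apply (H 0%nat). simpl. lia.
Qed.

Lemma length_dec k m t j : length (dec k m t j) = k.
Proof. unfold dec. rewrite length_map, length_seq. auto. Qed.

Lemma dec_in_Nk M k m t j : rel M (m * k) t -> (j < m)%nat -> in_Nk k (dec k m t j).
Proof.
  intros [Hl [Hs _]] Hj. split; [apply length_dec|]. split.
  - intros i Hi. unfold dec. rewrite !nth_map_seq by lia.
    apply SS_nth; auto. nia. rewrite Hl. nia.
  - intros i Hi. eauto.
Qed.

Lemma plegma_row M k m s : strict_incr M -> plegma M k m s ->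
  forall i j, (i < k)%nat -> (j < m)%nat -> (nth 0 (s 0%nat) 0 <= nth i (s j) 0)%nat.
Proof.
  intros HM [H1 [H2 H3]] i j Hi Hj.
  assert (A : forall i, (i < k)%nat -> (nth 0 (s 0%nat) 0 <= nth i (s 0%nat) 0)%nat).
  { induction i0; intros Hi0. lia.
    destruct (H1 0%nat ltac:(lia)) as [_ [Hinc _]].
    specialize (Hinc i0 Hi0). specialize (IHi0 ltac:(lia)). lia. }
  assert (B : forall j, (j < m)%nat -> (nth i (s 0%nat) 0 <= nth i (s j) 0)%nat).
  { induction j0; intros Hj0. lia.
    specialize (H2 i j0 Hi Hj0). specialize (IHj0 ltac:(lia)). lia. }
  specialize (A i Hi). specialize (B j Hj). lia.
Qed.

Lemma enc_spec D N k m s p : strict_incr D -> plegma D k m s ->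
  (forall n, (p <= n)%nat -> exists i, D n = N i) ->
  ((0 < m)%nat -> (D p <= nth 0 (s 0%nat) 0)%nat) ->
  rel N (m * k) (enc k m s) /\ forall j, (j < m)%nat -> dec k m (enc k m s) j = s j.
Proof.
  intros HD Hpl Hr Hmin.
  assert (Hnth : forall i j, (i < k)%nat -> (j < m)%nat -> nth (i * m + j) (enc k m s) 0%nat = nth i (s j) 0%nat).
  { intros i j Hi Hj. unfold enc. rewrite nth_map_seq by nia.
    destruct (divmod_eq i j m Hj) as [-> ->]. auto. }
  destruct Hpl as [P1 [P2 P3]].
  split; [split; [|split]|].
  - unfold enc. rewrite length_map, length_seq. auto.
  - apply nth_SS. intros r Hr'. unfold enc in Hr'. rewrite length_map, length_seq in Hr'.
    assert (Hm : m <> 0%nat) by (intro; subst; simpl in Hr'; lia).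
    pose proof (Nat.div_mod r m Hm) as Er. pose proof (Nat.mod_upper_bound r m Hm) as Mr.
    set (i := (r / m)%nat) in *. set (j := (r mod m)%nat) in *.
    assert (Hi : (i < k)%nat) by nia.
    replace r with (i * m + j)%nat by lia.
    destruct (Nat.eq_dec (S j) m) as [Ej|Ej].
    + replace (S (i * m + j)) with (S i * m + 0)%nat by nia.
      assert (Hi' : (S i < k)%nat) by nia.
      rewrite Hnth, Hnth by lia. specialize (P3 i Hi' ltac:(lia)).
      replace (m - 1)%nat with j in P3 by lia. auto.
    + replace (S (i * m + j)) with (i * m + S j)%nat by lia.
      rewrite Hnth, Hnth by lia. apply P2; auto; lia.
  - intros y Hy. apply In_nth with (d := 0%nat) in Hy. destruct Hy as [r [Hr' <-]].
    unfold enc in Hr' |- *. rewrite length_map, length_seq in Hr'.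
    assert (Hm : m <> 0%nat) by (intro; subst; simpl in Hr'; lia).
    pose proof (Nat.div_mod r m Hm) as Er. pose proof (Nat.mod_upper_bound r m Hm) as Mr.
    rewrite nth_map_seq by auto.
    set (i := (r / m)%nat) in *. set (j := (r mod m)%nat) in *.
    assert (Hi : (i < k)%nat) by nia.
    destruct (P1 j Mr) as [_ [_ Hin]]. destruct (Hin i Hi) as [n Hn].
    rewrite Hn. apply Hr.
    assert (Hle := plegma_row D k m s HD (conj P1 (conj P2 P3)) i j Hi Mr).
    specialize (Hmin ltac:(lia)). rewrite Hn in Hle.
    apply (si_refl_le D); auto. lia.
  - intros j Hj. unfold dec.
    rewrite <- (list_as_map (s j) k) by (destruct (P1 j Hj) as [L _]; auto).
    apply map_ext_in. intros i Hi. apply in_seq in Hi. apply Hnth; lia.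
Qed.

Fixpoint allvecs (m W : nat) : list (list nat) :=
  match m with
  | O => [nil]
  | S m' => concat (map (fun i => map (cons i) (allvecs m' W)) (seq 0 W))
  end.

Lemma allvecs_in m W : forall v, length v = m -> (forall j, (j < m)%nat -> (nth j v 0 < W)%nat) ->
  In v (allvecs m W).
Proof.
  induction m; intros v Hl Hb.
  - destruct v; [left; auto|discriminate].
  - destruct v as [|i v]; [discriminate|]. simpl in Hl. injection Hl as Hl.
    simpl. apply in_concat. exists (map (cons i) (allvecs m W)). split.
    + apply in_map_iff. exists i. split; auto. apply in_seq. specialize (Hb 0%nat). simpl in Hb. lia.
    + apply in_map. apply IHm; auto. intros j Hj. apply (Hb (S j)). lia.
Qed.

Lemma allvecs_bnd m W : forall v, In v (allvecs m W) -> forall j, (j < m)%nat -> (nth j v 0 < W)%nat.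
Proof.
  induction m; intros v Hv j Hj. lia.
  simpl in Hv. apply in_concat in Hv. destruct Hv as [l [Hl Hv]].
  apply in_map_iff in Hl. destruct Hl as [i [<- Hi]]. apply in_seq in Hi.
  apply in_map_iff in Hv. destruct Hv as [v' [<- Hv']].
  destruct j; simpl. lia. apply IHm; auto. lia.
Qed.

Definition Wn (p : nat) : nat := (2 * S p * (S p * S p) + 1)%nat.
Definition grid (p : nat) (v : list nat) (j : nat) : R :=
  - INR (S p) + INR (nth j v 0%nat) / INR (S p * S p).

Lemma INR_Sp_pos p : 0 < INR (S p).
Proof. apply lt_0_INR. lia. Qed.

Lemma grid_bnd p v m : In v (allvecs m (Wn p)) -> forall j, (j < m)%nat -> Rabs (grid p v j) <= INR (S p).
Proof.
  intros Hv j Hj. assert (H := allvecs_bnd m (Wn p) v Hv j Hj).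
  apply lt_INR in H. unfold Wn in H. rewrite plus_INR, !mult_INR in H. simpl (INR 1) in H.
  unfold grid. rewrite mult_INR. set (R0 := INR (S p)) in *. set (y := INR (nth j v 0%nat)) in *.
  assert (HR : 0 < R0) by apply INR_Sp_pos. assert (Hy : 0 <= y) by apply pos_INR.
  assert (HL : 0 < R0 * R0) by nra.
  assert (y / (R0 * R0) <= 2 * R0).
  { apply Rmult_le_reg_r with (R0 * R0); auto. unfold Rdiv. rewrite Rmult_assoc, Rinv_l by lra.
    simpl in H. assert (y <= 2 * R0 * (R0 * R0)).
    { assert (Hn : (nth j v 0 <= 2 * S p * (S p * S p))%nat).
      { pose proof (allvecs_bnd m (Wn p) v Hv j Hj). unfold Wn in H0. lia. }
      apply le_INR in Hn. rewrite !mult_INR in Hn. simpl (INR 2) in Hn. unfold y, R0. lra. }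
    lra. }
  assert (0 <= y / (R0 * R0)) by (apply Rmult_le_pos; auto; left; apply Rinv_0_lt_compat; auto).
  apply Rabs_le. lra.
Qed.

Definition rnd (p : nat) (y : R) : nat :=
  (Z.to_nat (up ((y + INR (S p)) * INR (S p * S p))) - 1)%nat.

Lemma rnd_spec p y : Rabs y <= INR (S p) ->
  (rnd p y < Wn p)%nat /\ Rabs (y - (- INR (S p) + INR (rnd p y) / INR (S p * S p))) <= 1 / INR (S p * S p).
Proof.
  intros Hy. set (L := INR (S p * S p)). set (R0 := INR (S p)).
  assert (HR : 0 < R0) by apply INR_Sp_pos.
  assert (HL : L = R0 * R0) by (unfold L, R0; rewrite mult_INR; auto).
  assert (HL0 : 0 < L) by nra.
  set (z := (y + R0) * L).
  assert (Hy' : - R0 <= y <= R0).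
  { pose proof (Rle_abs y). pose proof (Rle_abs (- y)). rewrite Rabs_Ropp in *. unfold R0. lra. }
  assert (Hz : 0 <= z <= 2 * R0 * L) by (unfold z; split; nra).
  destruct (archimed z) as [A1 A2].
  assert (Hz1 : (0 < up z)%Z) by (apply lt_IZR; change (IZR 0) with 0; lra).
  assert (Hup : (1 <= up z)%Z) by lia.
  assert (Hr : INR (rnd p y) = IZR (up z) - 1).
  { unfold rnd. fold R0. fold L. fold z. rewrite minus_INR.
    rewrite INR_IZR_INZ, Z2Nat.id by lia. simpl. auto.
    apply (Nat.le_trans _ (Z.to_nat 1)); [simpl; lia|]. apply Z2Nat.inj_le; lia. }
  split.
  - apply INR_lt. rewrite Hr. unfold Wn. rewrite plus_INR, !mult_INR. fold R0. simpl (INR 1). simpl (INR 2).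
    rewrite <- HL. lra.
  - replace (y - (- R0 + INR (rnd p y) / L)) with ((z - INR (rnd p y)) / L) by (unfold z; field; lra).
    rewrite Hr. unfold Rdiv. rewrite Rabs_mult, (Rabs_right (/ L)) by (left; apply Rinv_0_lt_compat; auto).
    apply Rmult_le_compat_r. left; apply Rinv_0_lt_compat; auto.
    apply Rabs_le. lra.
Qed.

Definition task_f (X : Banach) (x : list nat -> X) k p m v : list nat -> R :=
  fun t => Fa X x m (grid p v) (dec k m t).

Definition tasks (X : Banach) (x : list nat -> X) k p : list (nat * (list nat -> R)) :=
  flat_map (fun m => map (fun v => ((m * k)%nat, task_f X x k p m v)) (allvecs m (Wn p)))
    (seq 0 (S (S p))).

Definition homog (X : Banach) (x : list nat -> X) k p (M : nat -> nat) : Prop :=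
  forall m v t t', (m <= S p)%nat -> In v (allvecs m (Wn p)) -> rel M (m * k) t -> rel M (m * k) t' ->
    Rabs (task_f X x k p m v t - task_f X x k p m v t') <= 1 / INR (S p).

Lemma level_step (X : Banach) (x : list nat -> X) k C0 :
  (forall s, in_Nk k s -> vnorm X (x s) <= C0) -> 0 <= C0 ->
  forall p M, exists M', strict_incr M -> subseq M' M /\ homog X x k p M'.
Proof.
  intros HC HC0 p M. destruct (classic (strict_incr M)) as [HM|HM].
  2:{ exists M. intros; contradiction. }
  destruct (stepA (tasks X x k p) (INR (S p) * (INR (S p) * C0)) (1 / INR (S p)) M) as [M' [H1 H2]]; auto.
  - unfold Rdiv. rewrite Rmult_1_l. apply Rinv_0_lt_compat, INR_Sp_pos.
  - intros n f t Hin Ht. unfold tasks in Hin. apply in_flat_map in Hin.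
    destruct Hin as [m [Hm Hin]]. apply in_seq in Hm. apply in_map_iff in Hin.
    destruct Hin as [v [Heq Hv]]. injection Heq as <- <-.
    unfold task_f, Fa. rewrite Rabs_right by (apply Rle_ge, vnorm_nonneg).
    eapply Rle_trans. apply vsum_bound.
    + intros j Hj. rewrite vnorm_scal. apply Rmult_le_compat.
      apply Rabs_pos. apply vnorm_nonneg. apply (grid_bnd p v m Hv j Hj).
      apply HC. eapply dec_in_Nk; eauto.
    + apply Rmult_le_compat_r. apply Rmult_le_pos; auto. left; apply INR_Sp_pos.
      apply le_INR. lia.
  - exists M'. intros _. split; auto. intros m v t t' Hm Hv Ht Ht'.
    apply (H2 (m * k)%nat); auto. unfold tasks. apply in_flat_map. exists m. split.
    apply in_seq. lia. apply in_map_iff. exists v. auto.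
Qed.

Lemma tri3 a b c d e1 e2 e3 : Rabs (a - b) <= e1 -> Rabs (b - c) <= e2 -> Rabs (c - d) <= e3 ->
  Rabs (a - d) <= e1 + e2 + e3.
Proof.
  intros H1 H2 H3. unfold Rabs in *. destruct (Rcase_abs (a - b)); destruct (Rcase_abs (b - c));
  destruct (Rcase_abs (c - d)); destruct (Rcase_abs (a - d)); lra.
Qed.

Lemma key (X : Banach) (x : list nat -> X) k C0 M p m a t t' :
  (forall s, in_Nk k s -> vnorm X (x s) <= C0) -> 0 <= C0 -> homog X x k p M ->
  (m <= S p)%nat -> (forall j, (j < m)%nat -> Rabs (a j) <= INR (S p)) ->
  rel M (m * k) t -> rel M (m * k) t' ->
  Rabs (Fa X x m a (dec k m t) - Fa X x m a (dec k m t')) <= (2 * C0 + 1) / INR (S p).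
Proof.
  intros HC HC0 Hh Hm Ha Ht Ht'.
  pose (v := map (fun j => rnd p (a j)) (seq 0 m)).
  assert (Hvj : forall j, (j < m)%nat -> nth j v 0%nat = rnd p (a j)).
  { intros j Hj. unfold v. apply nth_map_seq. auto. }
  assert (Hv : In v (allvecs m (Wn p))).
  { apply allvecs_in. unfold v. rewrite length_map, length_seq. auto.
    intros j Hj. rewrite Hvj by auto. apply rnd_spec. auto. }
  assert (Hg : forall j, (j < m)%nat -> Rabs (a j - grid p v j) <= 1 / INR (S p * S p)).
  { intros j Hj. unfold grid. rewrite Hvj by auto. apply rnd_spec. auto. }
  set (R0 := INR (S p)). assert (HR : 0 < R0) by apply INR_Sp_pos.
  assert (HL : INR (S p * S p) = R0 * R0) by (rewrite mult_INR; auto).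
  rewrite HL in Hg.
  assert (Lip : forall u, rel M (m * k) u ->
     Rabs (Fa X x m a (dec k m u) - Fa X x m (grid p v) (dec k m u)) <= C0 / R0).
  { intros u Hu. eapply Rle_trans. apply Fa_lip; eauto.
    intros j Hj. apply HC. eapply dec_in_Nk; eauto.
    apply Rle_trans with (R0 * (1 / (R0 * R0) * C0)).
    apply Rmult_le_compat_r. apply Rmult_le_pos; auto. unfold Rdiv. rewrite Rmult_1_l.
    left. apply Rinv_0_lt_compat. nra. unfold R0. apply le_INR. auto.
    right. field. lra. }
  assert (H1 := Lip t Ht). assert (H3 := Lip t' Ht').
  rewrite Rabs_minus_sym in H3.
  assert (H2 := Hh m v t t' Hm Hv Ht Ht'). unfold task_f in H2. fold R0 in H2.
  replace ((2 * C0 + 1) / R0) with (C0 / R0 + 1 / R0 + C0 / R0) by (field; lra).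
  eapply tri3; eauto.
Qed.

Lemma key2 (X : Banach) (x : list nat -> X) k C0 M D p m a s s' :
  (forall s, in_Nk k s -> vnorm X (x s) <= C0) -> 0 <= C0 -> homog X x k p M ->
  strict_incr D -> (forall n, (p <= n)%nat -> exists i, D n = M i) ->
  (m <= S p)%nat -> (forall j, (j < m)%nat -> Rabs (a j) <= INR (S p)) ->
  plegma D k m s -> plegma D k m s' ->
  ((0 < m)%nat -> (D p <= nth 0 (s 0%nat) 0)%nat) ->
  ((0 < m)%nat -> (D p <= nth 0 (s' 0%nat) 0)%nat) ->
  Rabs (Fa X x m a s - Fa X x m a s') <= (2 * C0 + 1) / INR (S p).
Proof.
  intros HC HC0 Hh HD Hr Hm Ha Hs Hs' Hmin Hmin'.
  destruct (enc_spec D M k m s p HD Hs Hr Hmin) as [E1 E2].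
  destruct (enc_spec D M k m s' p HD Hs' Hr Hmin') as [E1' E2'].
  rewrite (Fa_ext X x m a a s (dec k m (enc k m s))).
  rewrite (Fa_ext X x m a a s' (dec k m (enc k m s'))).
  apply key with (M := M); auto.
  intros j Hj; split; auto. symmetry; auto.
  intros j Hj; split; auto. symmetry; auto.
Qed.

Lemma eps_lemma K eps : 0 < K -> 0 < eps -> exists N, forall p, (N <= p)%nat -> K / INR (S p) < eps.
Proof.
  intros HK He. destruct (INR_unbounded (K / eps)) as [N HN]. exists N. intros p Hp.
  assert (H1 : INR N <= INR (S p)) by (apply le_INR; lia).
  assert (H2 : 0 < K / eps) by (apply Rdiv_lt_0_compat; auto).
  assert (H3 : 0 < INR (S p)) by apply INR_Sp_pos.
  apply Rmult_lt_reg_r with (INR (S p)); auto. unfold Rdiv.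
  rewrite Rmult_assoc, Rinv_l, Rmult_1_r by lra.
  assert (K / eps < INR (S p)) by lra.
  apply Rmult_lt_compat_l with (r := eps) in H; auto.
  replace (eps * (K / eps)) with K in H by (field; lra). lra.
Qed.

Lemma lim_bound (u : nat -> R) L c e : Un_cv u L ->
  (exists Q, forall q, (Q <= q)%nat -> Rabs (c - u q) <= e) -> Rabs (c - L) <= e.
Proof.
  intros Hu [Q HQ]. destruct (Rle_or_lt (Rabs (c - L)) e) as [H|H]; auto.
  exfalso. destruct (Hu (Rabs (c - L) - e)) as [N HN]. lra.
  specialize (HN (Nat.max N Q) ltac:(lia)). specialize (HQ (Nat.max N Q) ltac:(lia)).
  unfold R_dist in HN.
  assert (Rabs (c - L) <= Rabs (c - u (Nat.max N Q)) + Rabs (u (Nat.max N Q) - L)).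
  { replace (c - L) with ((c - u (Nat.max N Q)) + (u (Nat.max N Q) - L)) by ring. apply Rabs_triang. }
  lra.
Qed.

Lemma bnd_exists m0 (f : nat -> R) : exists R0, 0 <= R0 /\ forall j, (j < m0)%nat -> Rabs (f j) <= R0.
Proof.
  induction m0. exists 0. split. lra. intros; lia.
  destruct IHm0 as [R0 [H0 H]]. exists (Rmax R0 (Rabs (f m0))). split.
  eapply Rle_trans; [apply H0|apply Rmax_l].
  intros j Hj. destruct (Nat.eq_dec j m0). subst. apply Rmax_r.
  eapply Rle_trans; [apply H; lia|apply Rmax_l].
Qed.

Lemma cv_const c : Un_cv (fun _ => c) c.
Proof. intros eps He. exists 0%nat. intros. rewrite R_dist_eq. auto. Qed.

Theorem mainTheorem4 (X : Banach) (k : nat) (Hk : (1 <= k)%nat)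
    (x : list nat -> X)
    (Hbdd : exists C : R, forall s, in_Nk k s -> vnorm X (x s) <= C) :
  exists (M : nat -> nat) (N : (nat -> R) -> R),
    strict_incr M /\ seminorm_c00 N /\ generates_spreading_model X k x M N.
Proof.
  destruct Hbdd as [C HC].
  set (C0 := Rmax C 0).
  assert (HC0 : forall s, in_Nk k s -> vnorm X (x s) <= C0).
  { intros s Hs. eapply Rle_trans. apply HC; auto. apply Rmax_l. }
  assert (HC0p : 0 <= C0) by apply Rmax_r.
  assert (LS := level_step X x k C0 HC0 HC0p).
  pose (G := fun p M => proj1_sig (constructive_indefinite_description _ (LS p M))).
  assert (GS : forall p M, strict_incr M -> subseq (G p M) M /\ homog X x k p (G p M)).
  { intros p M. unfold G. destruct (constructive_indefinite_description _ (LS p M)). auto. }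
  pose (Nl := nat_rect (fun _ => nat -> nat) (fun n => n) (fun p Np => G p Np)).
  assert (NS : forall p, Nl (S p) = G p (Nl p)) by reflexivity.
  assert (N0 : Nl 0%nat = fun n => n) by reflexivity.
  clearbody Nl.
  assert (Ninc : forall p, strict_incr (Nl p)).
  { induction p. rewrite N0. intros n; lia. rewrite NS. apply GS; auto. }
  assert (Nsub : forall p, subseq (Nl (S p)) (Nl p)).
  { intros p. rewrite NS. apply GS; auto. }
  assert (Nhom : forall p, homog X x k p (Nl (S p))).
  { intros p. rewrite NS. apply GS; auto. }
  assert (Nrange : forall p q, (p <= q)%nat -> forall n, exists i, Nl q n = Nl p i).
  { intros p q Hpq. induction Hpq as [|q Hpq IH]. intros n; exists n; auto.
    intros n. destruct (proj2 (Nsub q) n) as [i Hi]. destruct (IH i) as [j Hj].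
    exists j. congruence. }
  pose (D := fun p => Nl (S p) p).
  assert (Dinc : strict_incr D).
  { intros p. unfold D.
    assert (H1 := subseq_ge (Nl (S (S p))) (Nl (S p)) (S p) (Ninc _) (Nsub _)).
    assert (H2 := Ninc (S p) p). lia. }
  assert (Drange : forall p n, (p <= n)%nat -> exists i, D n = Nl (S p) i).
  { intros p n Hpn. unfold D. apply Nrange. lia. }
  pose (Sq := fun q j => map (fun i => D (q + i * q + j)%nat) (seq 0 k)).
  assert (Sq_nth : forall q j i, (i < k)%nat -> nth i (Sq q j) 0%nat = D (q + i * q + j)%nat).
  { intros q j i Hi. unfold Sq. apply (nth_map_seq (fun i => D (q + i * q + j)%nat)). auto. }
  assert (Sq_pl : forall q m, (1 <= q)%nat -> (m <= q)%nat -> plegma D k m (Sq q)).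
  { intros q m Hq Hm. split; [|split].
    - intros j Hj. split; [|split].
      + unfold Sq. rewrite length_map, length_seq. auto.
      + intros i Hi. rewrite !Sq_nth by lia. apply si_mono; auto. nia.
      + intros i Hi. rewrite Sq_nth by lia. eauto.
    - intros i j Hi Hj. rewrite !Sq_nth by lia. apply si_mono; auto. lia.
    - intros i Hi Hm0. rewrite !Sq_nth by lia. apply si_mono; auto. nia. }
  assert (Sq_min : forall q, nth 0 (Sq q 0%nat) 0%nat = D q).
  { intros q. rewrite Sq_nth by lia. f_equal. lia. }
  set (K := 2 * C0 + 1). assert (HK : 0 < K) by (unfold K; lra).
  assert (approx : forall p m a s q, (m <= S p)%nat -> (forall j, (j < m)%nat -> Rabs (a j) <= INR (S p)) ->
     plegma D k m s -> ((0 < m)%nat -> (D p <= nth 0 (s 0%nat) 0)%nat) -> (S p <= q)%nat -> (m <= q)%nat ->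
     Rabs (Fa X x m a s - Fa X x m a (Sq q)) <= K / INR (S p)).
  { intros p m a s q Hm Ha Hs Hmin Hq Hmq.
    apply key2 with (k := k) (M := Nl (S p)) (D := D) (C0 := C0); auto.
    apply Sq_pl; lia. intros _. rewrite Sq_min. apply si_le; auto. lia. }
  pose (h := fun q f => Fa X x q f (Sq q)).
  assert (Conv : forall f, c00 f -> exists l, Un_cv (fun q => h q f) l).
  { intros f [m0 Hf]. destruct (bnd_exists m0 f) as [R0 [HR0 HR]].
    assert (Cc : Cauchy_crit (fun q => h q f)).
    { intros eps He. destruct (eps_lemma K eps HK He) as [N1 HN1].
      destruct (INR_unbounded R0) as [N2 HN2].
      set (p := Nat.max N1 (Nat.max N2 m0)). exists (S p). intros n q Hn Hq.
      unfold R_dist, h. rewrite (Fa_tail X x m0 n) by (auto; lia).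
      rewrite (Fa_tail X x m0 q) by (auto; lia).
      eapply Rle_lt_trans. apply approx with (p := p); auto; try lia.
      - intros j Hj. eapply Rle_trans. apply HR; auto.
        assert (INR N2 <= INR (S p)) by (apply le_INR; lia). lra.
      - apply Sq_pl; lia.
      - intros _. rewrite Sq_min. apply si_le; auto. lia.
      - apply HN1. lia. }
    destruct (R_complete _ Cc) as [l Hl]. eauto. }
  pose (Nf := fun f => epsilon (inhabits 0) (fun l => Un_cv (fun q => h q f) l)).
  assert (Nspec : forall f, c00 f -> Un_cv (fun q => h q f) (Nf f)).
  { intros f Hf. unfold Nf. apply epsilon_spec. auto. }
  exists D, Nf. split; auto. split.
  - split; [|split].
    + intros f Hf. apply Rle_cv_lim with (Un := fun _ => 0) (Vn := fun q => h q f).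
      intros; apply vnorm_nonneg. apply cv_const. auto.
    + intros a f Hf.
      assert (Haf : c00 (fun n => a * f n)).
      { destruct Hf as [m0 Hm0]. exists m0. intros n Hn. rewrite Hm0; auto. ring. }
      apply (UL_sequence (fun q => h q (fun n => a * f n))). auto.
      replace (fun q => h q (fun n => a * f n)) with (fun q => Rabs a * h q f).
      apply CV_mult. apply cv_const. auto.
      apply functional_extensionality. intros q. unfold h. rewrite Fa_scal. auto.
    + intros f g Hf Hg.
      assert (Hfg : c00 (fun n => f n + g n)).
      { destruct Hf as [m0 Hm0]. destruct Hg as [m1 Hm1]. exists (Nat.max m0 m1).
        intros n Hn. rewrite Hm0, Hm1 by lia. ring. }
      apply Rle_cv_lim with (Un := fun q => h q (fun n => f n + g n)) (Vn := fun q => h q f + h q g).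
      intros q. apply Fa_add. auto. apply CV_plus; auto.
  - exists (fun n => K / INR (S (n - 1))). split; [|split].
    + intros n. apply Rdiv_lt_0_compat; auto. apply INR_Sp_pos.
    + intros eps He. destruct (eps_lemma K eps HK He) as [N1 HN1]. exists (S N1).
      intros n Hn. unfold R_dist. rewrite Rminus_0_r, Rabs_right.
      apply HN1. lia. apply Rle_ge. left. apply Rdiv_lt_0_compat; auto. apply INR_Sp_pos.
    + intros l m s a Hl Hml Hpl Hmin Ha.
      set (comb := c00_comb m a).
      assert (Hc : c00 comb).
      { exists m. intros n Hn. unfold comb, c00_comb.
        destruct (Nat.ltb_spec n m); auto. lia. }
      assert (Hca : forall j, (j < m)%nat -> comb j = a j).
      { intros j Hj. unfold comb, c00_comb. destruct (Nat.ltb_spec j m); auto. lia. }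
      apply lim_bound with (u := fun q => h q comb). apply Nspec; auto.
      exists (Nat.max l m). intros q Hq.
      change (vnorm X (vsum X m (fun j => vscal X (a j) (x (s j))))) with (Fa X x m a s).
      unfold h. rewrite (Fa_tail X x m q) by (try lia; intros j Hj; unfold comb, c00_comb;
        destruct (Nat.ltb_spec j m); auto; lia).
      rewrite (Fa_ext X x m a comb s s) by (intros j Hj; split; auto; symmetry; auto).
      replace (S (l - 1)) with l in * by lia.
      assert (E : l = S (l - 1)) by lia. rewrite E.
      apply approx; try lia; auto.
      * intros j Hj. rewrite Hca by auto. specialize (Ha j Hj).
        assert (1 <= INR (S (l - 1))) by (apply (le_INR 1); lia).
        apply Rabs_le. lra.
Qed.
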